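(* Let $h:\mathbb{R}\to\mathbb{R}$ be a smooth function with $h(T)=\pi/2$ for $T\le 0$, $0<h(T)<\pi/2$ for $0<T<1$, and $h(T)=0$ for $T\ge 1$. For $0<x<1$ let $g(x)=\tan\bigl(h(x)\bigr)$, and for $0\le x<1$ let $B(x)=\exp\left(\int_0^x \cot\bigl(h(z)\bigr)\,dz\right)$. Assume $g'''(x)<0$ for all $0<x<1$. Define, for $0<x<1$, $$\mathcal{C}(x)=\frac{1}{B(x)}\int_0^{x}\cos(x-z)\,B'(z)\,\frac{g(x)-g(z)}{x-z}\,dz .$$ Then $\lim_{x\to 1_-}\mathcal{C}(x)=0$.
   Context: The quotient $\frac{g(x)-g(z)}{x-z}$ is understood as $g'(x)$ at $z=x$. (In the paper the variable $x$ appears as $y+A$.) *)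

(* Defs.v *)
From Stdlib Require Import Reals.
From Coquelicot Require Import Coquelicot.
Open Scope R_scope.

Definition smooth (h : R -> R) : Prop :=
  forall (n : nat) (x : R), ex_derive (Derive_n h n) x.

Definition cot (t : R) : R := cos t / sin t.

(* g(x) = tan(h(x)) (only used for 0 < x < 1 / on [0,x] inside an integral) *)
Definition g_of (h : R -> R) (x : R) : R := tan (h x).

Definition B_of (h : R -> R) (x : R) : R :=
  exp (RInt (fun z => cot (h z)) 0 x).

Definition dq (g : R -> R) (x z : R) : R :=
  match Req_EM_T z x with
  | left _ => Derive g x
  | right _ => (g x - g z) / (x - z)
  end.

Definition C_of (h : R -> R) (x : R) : R :=
  / B_of h x *
  RInt (fun z => cos (x - z) * Derive (B_of h) z * dq (g_of h) x z) 0 x.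

(* Main.v *)
Require Import Defs.
From Stdlib Require Import Reals Lra.
From Coquelicot Require Import Coquelicot.
Open Scope R_scope.

Lemma loc_of (x : R) (P : R -> Prop) :
  (exists d, 0 < d /\ forall y, Rabs (y - x) < d -> P y) -> locally x P.
Proof. intros [d [Hd H]]. exists (mkposreal d Hd). intros y Hy. apply H. exact Hy. Qed.

Lemma eps_cont (f : R -> R) x :
  (forall e, 0 < e -> exists d, 0 < d /\ forall y, Rabs (y - x) < d -> Rabs (f y - f x) < e) ->
  continuous f x.
Proof.
  intros H. apply continuity_pt_filterlim. intros e He.
  destruct (H e He) as [d [Hd Hy]]. exists d. split; auto.
  intros y [_ Hy']. apply Hy. exact Hy'.
Qed.

Lemma cont_eps (f : R -> R) x : continuous f x ->
  forall e, 0 < e -> exists d, 0 < d /\ forall y, Rabs (y - x) < d -> Rabs (f y - f x) < e.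
Proof.
  intros H. apply continuity_pt_filterlim in H. intros e He.
  destruct (H e He) as [d [Hd Hy]]. exists d. split; auto.
  intros y Hy'. destruct (Req_dec y x) as [->|Ne].
  - unfold Rminus. rewrite Rplus_opp_r, Rabs_R0. exact He.
  - apply Hy. split. split. constructor. auto. exact Hy'.
Qed.

Lemma h_cont h : smooth h -> forall x, continuous h x.
Proof. intros Hs x. exact (@ex_derive_continuous R_AbsRing R_NormedModule h x (Hs 0%nat x)). Qed.

Lemma h_der h : smooth h -> forall x, ex_derive h x.
Proof. intros Hs x. exact (Hs 0%nat x). Qed.

Lemma dh_cont h : smooth h -> forall x, continuous (Derive h) x.
Proof. intros Hs x. exact (@ex_derive_continuous R_AbsRing R_NormedModule (Derive h) x (Hs 1%nat x)). Qed.

Lemma dh1 h : smooth h -> (forall T, 1 <= T -> h T = 0) -> Derive h 1 = 0.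
Proof.
  intros Hs H2. pose proof (Derive_correct _ _ (h_der h Hs 1)) as D.
  apply is_derive_Reals in D. set (l := Derive h 1) in *.
  destruct (Req_dec l 0) as [E|E]; auto. exfalso.
  assert (Hl : 0 < Rabs l) by (apply Rabs_pos_lt; auto).
  destruct (D (Rabs l) Hl) as [d Hd].
  assert (Hp : 0 < d / 2) by (destruct d; simpl; lra).
  specialize (Hd (d/2) ltac:(lra)).
  rewrite Rabs_pos_eq in Hd by lra.
  specialize (Hd ltac:(destruct d; simpl in *; lra)).
  rewrite (H2 (1 + d/2)) in Hd by lra. rewrite (H2 1) in Hd by lra.
  replace ((0 - 0) / (d/2) - l) with (- l) in Hd by (field; lra).
  rewrite Rabs_Ropp in Hd. lra.
Qed.

Definition Hh h := smooth h /\ (forall T, T <= 0 -> h T = PI/2) /\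
  (forall T, 0 < T < 1 -> 0 < h T < PI/2) /\ (forall T, 1 <= T -> h T = 0).

Lemma PI2_pos : 0 < PI/2.
Proof. pose proof PI_RGT_0. lra. Qed.

Lemma sin_hpos h : Hh h -> forall z, z < 1 -> 0 < sin (h z).
Proof.
  intros (Hs&H0&H1&H2) z Hz. destruct (Rle_lt_dec z 0).
  - rewrite H0, sin_PI2 by auto. lra.
  - apply sin_gt_0; pose proof (H1 z ltac:(lra)); lra.
Qed.

Lemma cos_hpos h : Hh h -> forall z, 0 < z -> 0 < cos (h z).
Proof.
  intros (Hs&H0&H1&H2) z Hz. destruct (Rlt_le_dec z 1).
  - apply cos_gt_0; pose proof (H1 z ltac:(lra)); pose proof PI2_pos; lra.
  - rewrite H2, cos_0 by auto. lra.
Qed.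

Lemma cos_hnn h : Hh h -> forall z, 0 <= cos (h z).
Proof.
  intros H z. destruct (Rle_lt_dec z 0).
  - destruct H as (Hs&H0&H1&H2). rewrite H0, cos_PI2 by auto. lra.
  - left. apply (cos_hpos h H). auto.
Qed.

Lemma b_der h : Hh h -> forall z, z < 1 -> ex_derive (fun z => cot (h z)) z.
Proof.
  intros H z Hz. pose proof (sin_hpos h H z Hz). destruct H as (Hs&_).
  unfold cot. auto_derive. split. apply (h_der h Hs). split. apply (h_der h Hs). split; auto. lra.
Qed.

Lemma b_cont h : Hh h -> forall z, z < 1 -> continuous (fun z => cot (h z)) z.
Proof.
  intros H z Hz. exact (@ex_derive_continuous R_AbsRing R_NormedModule _ z (b_der h H z Hz)).
Qed.

Lemma b_nn h : Hh h -> forall z, z < 1 -> 0 <= cot (h z).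
Proof.
  intros H z Hz. unfold cot. pose proof (sin_hpos h H z Hz). pose proof (cos_hnn h H z).
  apply Rdiv_le_0_compat; lra.
Qed.

Lemma b0 h : Hh h -> cot (h 0) = 0.
Proof. intros (Hs&H0&_). unfold cot. rewrite H0 by lra. rewrite cos_PI2. unfold Rdiv. ring. Qed.

Lemma g_isder h : Hh h -> forall z, 0 < z ->
  is_derive (g_of h) z ((tan (h z) ^ 2 + 1) * Derive h z).
Proof.
  intros H z Hz. pose proof (cos_hpos h H z Hz). destruct H as (Hs&_).
  unfold g_of. rewrite Rmult_comm.
  apply (is_derive_comp tan h z). apply is_derive_tan. lra.
  apply Derive_correct. apply (h_der h Hs).
Qed.

Lemma g_der h : Hh h -> forall z, 0 < z -> ex_derive (g_of h) z.
Proof. intros H z Hz. eexists. apply (g_isder h H z Hz). Qed.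

Lemma g_cont h : Hh h -> forall z, 0 < z -> continuous (g_of h) z.
Proof.
  intros H z Hz. exact (@ex_derive_continuous R_AbsRing R_NormedModule _ z (g_der h H z Hz)).
Qed.

Lemma g_pos h : Hh h -> forall z, 0 < z < 1 -> 0 < g_of h z.
Proof.
  intros H z Hz. unfold g_of, tan. pose proof (sin_hpos h H z ltac:(lra)).
  pose proof (cos_hpos h H z ltac:(lra)). apply Rdiv_lt_0_compat; lra.
Qed.

Lemma bg h : Hh h -> forall z, 0 < z < 1 -> cot (h z) * g_of h z = 1.
Proof.
  intros H z Hz. unfold g_of, tan, cot. pose proof (sin_hpos h H z ltac:(lra)).
  pose proof (cos_hpos h H z ltac:(lra)). field. lra.
Qed.

Lemma g1 h : Hh h -> g_of h 1 = 0.
Proof. intros (Hs&H0&H1&H2). unfold g_of. rewrite H2 by lra. apply tan_0. Qed.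

Lemma dg1 h : Hh h -> Derive (g_of h) 1 = 0.
Proof.
  intros H. rewrite (is_derive_unique _ _ _ (g_isder h H 1 ltac:(lra))).
  destruct H as (Hs&H0&H1&H2). rewrite (dh1 h Hs H2). ring.
Qed.

Lemma dg_cont1 h : Hh h -> continuous (Derive (g_of h)) 1.
Proof.
  intros H.
  apply (continuous_ext_loc _ (fun z => (tan (h z) ^ 2 + 1) * Derive h z) 1).
  - apply loc_of. exists 1. split. lra. intros y Hy.
    symmetry. apply is_derive_unique. apply g_isder. auto.
    apply Rabs_def2 in Hy. lra.
  - apply (@continuous_mult R_UniformSpace R_AbsRing (fun z => tan (h z)^2+1) (Derive h)).
    + apply (@continuous_plus R_UniformSpace R_AbsRing R_NormedModule (fun z => tan (h z)^2) (fun _ => 1)).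
      2: apply continuous_const.
      apply (@continuous_mult R_UniformSpace R_AbsRing (g_of h) (fun z => tan (h z)^1)).
      apply (g_cont h H 1). lra.
      apply (@continuous_mult R_UniformSpace R_AbsRing (g_of h) (fun z => 1)).
      apply (g_cont h H 1). lra. apply continuous_const.
    + destruct H as (Hs&_). apply (dh_cont h Hs).
Qed.

Lemma dg_small h : Hh h -> forall e, 0 < e -> exists d, 0 < d /\
  forall c, Rabs (c - 1) < d -> Rabs (Derive (g_of h) c) < e.
Proof.
  intros H e He. destruct (cont_eps _ _ (dg_cont1 h H) e He) as [d [Hd Hc]].
  exists d. split; auto. intros c Hcd. specialize (Hc c Hcd). rewrite dg1 in Hc by auto.
  rewrite Rminus_0_r in Hc. exact Hc.
Qed.

Lemma exR_b h : Hh h -> forall u v, u < 1 -> v < 1 -> ex_RInt (fun z => cot (h z)) u v.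
Proof.
  intros H u v Hu Hv. apply (@ex_RInt_continuous R_CompleteNormedModule). intros z Hz.
  apply (b_cont h H). pose proof (Rmax_lub_lt u v 1 Hu Hv). lra.
Qed.

Lemma B_isder h : Hh h -> forall y, y < 1 -> is_derive (B_of h) y (B_of h y * cot (h y)).
Proof.
  intros H y Hy. unfold B_of.
  assert (D : is_derive (fun t => RInt (fun z => cot (h z)) 0 t) y (cot (h y))).
  { apply (is_derive_RInt (fun z => cot (h z)) (fun t => RInt (fun z => cot (h z)) 0 t) 0 y).
    - apply loc_of. exists (1 - y). split. lra. intros t Ht. apply (@RInt_correct R_CompleteNormedModule).
      apply (exR_b h H). lra. apply Rabs_def2 in Ht. lra.
    - apply (b_cont h H). auto. }
  pose proof (is_derive_comp exp _ y _ _ (is_derive_exp _) D) as E.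
  replace (exp (RInt (fun z => cot (h z)) 0 y) * cot (h y))
    with (scal (cot (h y)) (exp (RInt (fun z => cot (h z)) 0 y))).
  exact E. unfold scal; simpl; unfold mult; simpl. ring.
Qed.

Lemma dB h : Hh h -> forall y, y < 1 -> Derive (B_of h) y = B_of h y * cot (h y).
Proof. intros H y Hy. apply is_derive_unique. apply B_isder; auto. Qed.

Lemma B_pos h : forall y, 0 < B_of h y.
Proof. intros y. unfold B_of. apply exp_pos. Qed.

Lemma B_0 h : B_of h 0 = 1.
Proof. unfold B_of. rewrite RInt_point. apply exp_0. Qed.

Lemma B_cont h : Hh h -> forall y, y < 1 -> continuous (B_of h) y.
Proof.
  intros H y Hy. apply (@ex_derive_continuous R_AbsRing R_NormedModule).
  eexists. apply B_isder; auto.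
Qed.

Lemma B_ratio h : Hh h -> forall u v, u < 1 -> v < 1 ->
  B_of h v = B_of h u * exp (RInt (fun z => cot (h z)) u v).
Proof.
  intros H u v Hu Hv. unfold B_of. rewrite <- exp_plus. f_equal.
  rewrite <- (RInt_Chasles (fun z => cot (h z)) 0 u v). reflexivity.
  apply exR_b; auto; lra. apply exR_b; auto.
Qed.

Lemma Rint_b_nn h : Hh h -> forall u v, u <= v -> v < 1 -> 0 <= RInt (fun z => cot (h z)) u v.
Proof.
  intros H u v Huv Hv. apply RInt_ge_0; auto. apply exR_b; auto; lra.
  intros z Hz. apply b_nn; auto; lra.
Qed.

Lemma B_mono h : Hh h -> forall u v, u <= v -> v < 1 -> B_of h u <= B_of h v.
Proof.
  intros H u v Huv Hv. rewrite (B_ratio h H u v) by lra.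
  pose proof (Rint_b_nn h H u v Huv Hv). pose proof (B_pos h u).
  rewrite <- (Rmult_1_r (B_of h u)) at 1. apply Rmult_le_compat_l. lra.
  pose proof (exp_ineq1_le (RInt (fun z => cot (h z)) u v)). lra.
Qed.

Lemma dB_cont h : Hh h -> forall y, y < 1 -> continuous (Derive (B_of h)) y.
Proof.
  intros H y Hy.
  apply (continuous_ext_loc _ (fun t => B_of h t * cot (h t)) y).
  - apply loc_of. exists (1 - y). split. lra. intros t Ht.
    symmetry. apply dB; auto. apply Rabs_def2 in Ht. lra.
  - apply (@continuous_mult R_UniformSpace R_AbsRing (B_of h) (fun t => cot (h t))).
    apply B_cont; auto. apply b_cont; auto.
Qed.

Lemma dB_nn h : Hh h -> forall y, y < 1 -> 0 <= Derive (B_of h) y.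
Proof.
  intros H y Hy. rewrite dB by auto. apply Rmult_le_pos. left; apply B_pos. apply b_nn; auto.
Qed.

Lemma dq_cont h : Hh h -> forall x z, 0 < x -> 0 < z -> continuous (dq (g_of h) x) z.
Proof.
  intros H x z Hx Hz. destruct (Req_dec z x) as [->|Ne].
  - apply eps_cont. intros e He.
    pose proof (Derive_correct _ _ (g_der h H x Hx)) as D.
    apply is_derive_Reals in D. destruct (D e He) as [d Hd].
    exists d. split. apply cond_pos. intros y Hy.
    unfold dq. destruct (Req_EM_T x x) as [_|C]; [|now contradiction C].
    destruct (Req_EM_T y x) as [E|E].
    + unfold Rminus. rewrite Rplus_opp_r, Rabs_R0. exact He.
    + assert (Hyx : y - x <> 0) by lra.
      specialize (Hd (y - x) Hyx Hy). replace (x + (y - x)) with y in Hd by ring.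
      replace ((g_of h x - g_of h y) / (x - y)) with ((g_of h y - g_of h x) / (y - x)).
      exact Hd. field. lra.
  - apply (continuous_ext_loc _ (fun y => (g_of h x - g_of h y) / (x - y)) z).
    + apply loc_of. exists (Rabs (z - x)). split. apply Rabs_pos_lt. lra.
      intros y Hy. unfold dq. destruct (Req_EM_T y x) as [E|E]; auto.
      subst. rewrite Rabs_minus_sym in Hy. lra.
    + apply (@ex_derive_continuous R_AbsRing R_NormedModule).
      auto_derive. split. apply g_der; auto. split; auto. lra.
Qed.

Definition Fi h x := fun z => cos (x - z) * Derive (B_of h) z * dq (g_of h) x z.

Lemma exF_right h : Hh h -> forall x a, 0 < a <= x -> x < 1 -> ex_RInt (Fi h x) a x.
Proof.
  intros H x a Ha Hx. apply (@ex_RInt_continuous R_CompleteNormedModule).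
  intros z Hz. rewrite Rmin_left in Hz by lra. rewrite Rmax_right in Hz by lra.
  unfold Fi.
  apply (@continuous_mult R_UniformSpace R_AbsRing (fun z => cos (x - z) * Derive (B_of h) z) (dq (g_of h) x)).
  apply (@continuous_mult R_UniformSpace R_AbsRing (fun z => cos (x - z)) (Derive (B_of h))).
  apply (@ex_derive_continuous R_AbsRing R_NormedModule). auto_derive. auto.
  apply dB_cont; auto; lra.
  apply dq_cont; auto; lra.
Qed.

Lemma Fi_left_eq h : Hh h -> forall x z, 0 < z < x -> x < 1 ->
  Fi h x z = cos (x - z) * (B_of h z * (cot (h z) * g_of h x - 1) / (x - z)).
Proof.
  intros H x z Hz Hx. unfold Fi, dq. destruct (Req_EM_T z x) as [E|E]. lra.
  rewrite (dB h H z) by lra. rewrite <- (bg h H z) by lra. field. lra.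
Qed.

Lemma exF_left h : Hh h -> forall x a, 0 <= a < x -> x < 1 -> ex_RInt (Fi h x) 0 a.
Proof.
  intros H x a Ha Hx.
  apply (ex_RInt_ext (fun z => cos (x - z) * (B_of h z * (cot (h z) * g_of h x - 1) / (x - z)))).
  { intros z Hz. rewrite Rmin_left in Hz by lra. rewrite Rmax_right in Hz by lra.
    symmetry. apply Fi_left_eq; auto; lra. }
  apply (@ex_RInt_continuous R_CompleteNormedModule).
  intros z Hz. rewrite Rmin_left in Hz by lra. rewrite Rmax_right in Hz by lra.
  apply (@ex_derive_continuous R_AbsRing R_NormedModule). unfold cot. auto_derive.
  pose proof (sin_hpos h H z ltac:(lra)). pose proof (B_isder h H z ltac:(lra)) as HB.
  destruct H as (Hs&_).
  repeat split; try apply (h_der h Hs); try lra.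
  eexists; exact HB.
Qed.

Lemma mvt_g h : Hh h -> forall u v, 0 < u < v ->
  exists c, u <= c <= v /\ g_of h v - g_of h u = Derive (g_of h) c * (v - u).
Proof.
  intros H u v Huv.
  destruct (MVT_gen (g_of h) u v (Derive (g_of h))) as [c [Hc E]].
  - intros t Ht. rewrite Rmin_left in Ht by lra. apply Derive_correct. apply g_der; auto; lra.
  - intros t Ht. rewrite Rmin_left in Ht by lra. apply continuity_pt_filterlim.
    apply g_cont; auto; lra.
  - rewrite Rmin_left in Hc by lra. rewrite Rmax_right in Hc by lra.
    exists c. split; auto.
Qed.

Lemma g_small h : Hh h -> forall z e, 0 < z < 1 ->
  (forall c, z <= c <= 1 -> Rabs (Derive (g_of h) c) <= e) -> g_of h z <= e * (1 - z).
Proof.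
  intros H z e Hz Hc. destruct (mvt_g h H z 1 ltac:(lra)) as [c [Hc1 E]].
  rewrite (g1 h H) in E. specialize (Hc c Hc1).
  apply Rabs_le_between in Hc.
  assert (g_of h z = - Derive (g_of h) c * (1 - z)) by lra. rewrite H0.
  apply Rmult_le_compat_r; lra.
Qed.

Lemma bound_right h : Hh h -> forall x a e, 0 < a <= x -> x < 1 ->
  (forall c, a <= c <= x -> Rabs (Derive (g_of h) c) <= e) ->
  forall z, a <= z <= x -> Rabs (Fi h x z) <= e * Derive (B_of h) z.
Proof.
  intros H x a e Ha Hx Hc z Hz.
  assert (Hdq : Rabs (dq (g_of h) x z) <= e).
  { unfold dq. destruct (Req_EM_T z x) as [E|E].
    - apply Hc. lra.
    - destruct (mvt_g h H z x ltac:(lra)) as [c [Hc1 Ec]].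
      replace ((g_of h x - g_of h z) / (x - z)) with (Derive (g_of h) c).
      apply Hc; lra. rewrite Ec. field. lra. }
  pose proof (dB_nn h H z ltac:(lra)).
  unfold Fi. rewrite !Rabs_mult. rewrite (Rabs_pos_eq (Derive (B_of h) z)) by auto.
  pose proof (Rabs_pos (dq (g_of h) x z)). pose proof (COS_bound (x - z)).
  assert (Rabs (cos (x - z)) <= 1) by (apply Rabs_le; lra).
  pose proof (Rabs_pos (cos (x - z))).
  set (cc := Rabs (cos (x - z))) in *. set (q := Rabs (dq (g_of h) x z)) in *.
  set (D := Derive (B_of h) z) in *.
  assert (cc * D <= D) by nra. nra.
Qed.

Lemma bound_left h : Hh h -> forall x a ep, 0 < ep -> 0 < a -> a + ep <= x -> x < 1 ->
  g_of h x <= 1 ->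
  forall z, 0 <= z <= a -> Rabs (Fi h x z) <= /ep * Derive (B_of h) z + /ep * B_of h a.
Proof.
  intros H x a ep Hep Ha Hax Hx Hg z Hz.
  pose proof (dB_nn h H z ltac:(lra)) as HD.
  pose proof (B_pos h a) as HBa. pose proof (Rinv_0_lt_compat ep Hep) as Hie.
  destruct (Req_dec z 0) as [->|Nz].
  - assert (E : Fi h x 0 = 0).
    { unfold Fi. rewrite (dB h H 0) by lra. rewrite (b0 h H). ring. }
    rewrite E, Rabs_R0.
    apply Rplus_le_le_0_compat; apply Rmult_le_pos; lra.
  - rewrite (Fi_left_eq h H x z) by lra.
    rewrite (dB h H z) by lra.
    pose proof (b_nn h H z ltac:(lra)) as Hb.
    pose proof (g_pos h H x ltac:(lra)) as Hgx.
    pose proof (B_pos h z) as HBz.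
    pose proof (B_mono h H z a ltac:(lra) ltac:(lra)) as HBza.
    set (b := cot (h z)) in *. set (gx := g_of h x) in *.
    set (Bz := B_of h z) in *. set (Ba := B_of h a) in *.
    assert (Hc : Rabs (b * gx - 1) <= b + 1).
    { apply Rabs_le. split; nra. }
    pose proof (COS_bound (x - z)).
    assert (Hcos : Rabs (cos (x - z)) <= 1) by (apply Rabs_le; lra).
    rewrite Rabs_mult.
    replace (Bz * (b * gx - 1) / (x - z)) with ((Bz / (x - z)) * (b * gx - 1)) by (field; lra).
    rewrite Rabs_mult. rewrite (Rabs_pos_eq (Bz / (x - z))).
    2: apply Rdiv_le_0_compat; lra.
    assert (Hd : Bz / (x - z) <= Bz / ep).
    { unfold Rdiv. apply Rmult_le_compat_l. lra. apply Rinv_le_contravar; lra. }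
    assert (Bz / (x - z) * Rabs (b * gx - 1) <= Bz / ep * (b + 1)).
    { apply Rmult_le_compat; auto. apply Rdiv_le_0_compat; lra. apply Rabs_pos. }
    assert (Bz / ep * (b + 1) <= / ep * (Bz * b) + / ep * Ba).
    { unfold Rdiv. nra. }
    pose proof (Rabs_pos (cos (x - z))).
    assert (0 <= Bz / (x - z) * Rabs (b * gx - 1)).
    { apply Rmult_le_pos. apply Rdiv_le_0_compat; lra. apply Rabs_pos. }
    nra.
Qed.

Lemma int_bound h : Hh h -> forall x a ep e, 0 < ep -> 0 < a -> a + ep <= x -> x < 1 ->
  g_of h x <= 1 -> (forall c, a <= c <= x -> Rabs (Derive (g_of h) c) <= e) ->
  Rabs (RInt (Fi h x) 0 x) <= /ep * (B_of h a - B_of h 0) + a * (/ep * B_of h a)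
                               + e * (B_of h x - B_of h a).
Proof.
  intros H x a ep e Hep Ha Hax Hx Hg Hc.
  pose proof (exF_left h H x a ltac:(lra) Hx) as EL.
  pose proof (exF_right h H x a ltac:(lra) Hx) as ER.
  rewrite <- (RInt_Chasles _ 0 a x EL ER).
  assert (ID : forall u v, u <= v -> v < 1 ->
     is_RInt (Derive (B_of h)) u v (minus (B_of h v) (B_of h u))).
  { intros u v Huv Hv. apply (@is_RInt_derive R_CompleteNormedModule).
    - intros t Ht. apply Derive_correct. eexists. apply B_isder; auto.
      pose proof (Rmax_lub_lt u v 1 ltac:(lra) Hv). lra.
    - intros t Ht. apply dB_cont; auto. pose proof (Rmax_lub_lt u v 1 ltac:(lra) Hv). lra. }
  assert (L1 : norm (RInt (Fi h x) 0 a) <= /ep * (B_of h a - B_of h 0) + a * (/ep * B_of h a)).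
  { pose proof (is_RInt_plus _ _ _ _ _ _
        (is_RInt_scal _ _ _ (/ep) _ (ID 0 a ltac:(lra) ltac:(lra)))
        (is_RInt_const 0 a (/ep * B_of h a))) as I.
    pose proof (norm_RInt_le (Fi h x) (fun y => /ep * Derive (B_of h) y + /ep * B_of h a) 0 a (RInt (Fi h x) 0 a)
       (/ep * (B_of h a - B_of h 0) + (a - 0) * (/ep * B_of h a)) ltac:(lra)) as N.
    specialize (N ltac:(intros z Hz; apply (bound_left h H x a ep); auto)).
    specialize (N (RInt_correct _ _ _ EL) I).
    replace (a - 0) with a in N by ring. exact N. }
  assert (L2 : norm (RInt (Fi h x) a x) <= e * (B_of h x - B_of h a)).
  { pose proof (is_RInt_scal _ _ _ e _ (ID a x ltac:(lra) ltac:(lra))) as I.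
    pose proof (norm_RInt_le (Fi h x) (fun y => e * Derive (B_of h) y) a x (RInt (Fi h x) a x)
       (e * (B_of h x - B_of h a)) ltac:(lra)) as N.
    specialize (N ltac:(intros z Hz; apply (bound_right h H x a e); auto; lra)).
    specialize (N (RInt_correct _ _ _ ER) I). exact N. }
  change (norm (RInt (Fi h x) 0 a)) with (Rabs (RInt (Fi h x) 0 a)) in L1.
  change (norm (RInt (Fi h x) a x)) with (Rabs (RInt (Fi h x) a x)) in L2.
  change (plus (RInt (Fi h x) 0 a) (RInt (Fi h x) a x)) with
    (RInt (Fi h x) 0 a + RInt (Fi h x) a x).
  eapply Rle_trans. apply Rabs_triang. lra.
Qed.

Theorem mainTheorem4 (h : R -> R) :
  smooth h ->
  (forall T, T <= 0 -> h T = PI / 2) ->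
  (forall T, 0 < T < 1 -> 0 < h T < PI / 2) ->
  (forall T, 1 <= T -> h T = 0) ->
  (forall x, 0 < x < 1 -> Derive_n (g_of h) 3 x < 0) ->
  filterlim (C_of h) (at_left 1) (locally 0).
Proof.
  intros Hs H0 H1 H2 _. assert (H : Hh h) by exact (conj Hs (conj H0 (conj H1 H2))).
  apply filterlim_locally. intros [eps Heps]. simpl.
  set (e1 := Rmin (eps/2) 1).
  assert (He1 : 0 < e1) by (apply Rmin_glb_lt; lra).
  assert (He1a : e1 <= eps/2) by apply Rmin_l.
  assert (He1b : e1 <= 1) by apply Rmin_r.
  destruct (dg_small h H e1 He1) as [d1 [Hd1 Hdg1]].
  set (ep := Rmin (d1/2) (1/2)).
  assert (Hep : 0 < ep) by (apply Rmin_glb_lt; lra).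
  assert (Hepa : ep <= d1/2) by apply Rmin_l.
  assert (Hepb : ep <= 1/2) by apply Rmin_r.
  set (L := 4 / (ep * eps)).
  assert (HL : 0 < L) by (unfold L; apply Rdiv_lt_0_compat; nra).
  assert (HLe : L * (ep * eps) = 4) by (unfold L; field; lra).
  set (e2 := / (2 * L)).
  assert (He2 : 0 < e2) by (unfold e2; apply Rinv_0_lt_compat; lra).
  destruct (dg_small h H e2 He2) as [d2 [Hd2 Hdg2]].
  unfold at_left, within. apply loc_of.
  exists (Rmin (ep/2) (d2/2)). split. apply Rmin_glb_lt; lra.
  intros x Hx1 Hx. 
  assert (Hr1 : Rabs (x - 1) < ep/2) by (eapply Rlt_le_trans; [exact Hx1| apply Rmin_l]).
  assert (Hr2 : Rabs (x - 1) < d2/2) by (eapply Rlt_le_trans; [exact Hx1| apply Rmin_r]).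
  rewrite Rabs_left in Hr1, Hr2 by lra.
  set (a := x - ep).
  assert (Ha : 0 < a) by (unfold a; lra).
  assert (Hc1 : forall c, a <= c <= x -> Rabs (Derive (g_of h) c) <= e1).
  { intros c Hc. left. apply Hdg1. rewrite Rabs_left1 by lra. unfold a in Hc. lra. }
  assert (Hgx : g_of h x <= 1).
  { assert (g_of h x <= e1 * (1 - x)).
    { apply (g_small h H). lra. intros c Hc. left. apply Hdg1.
      rewrite Rabs_left1 by lra. lra. }
    assert (e1 * (1 - x) <= 1) by nra. lra. }
  pose proof (int_bound h H x a ep e1 Hep Ha ltac:(unfold a; lra) Hx Hgx Hc1) as IB.
  set (m := 2 * x - 1).
  assert (Hbz : forall z, m < z < x -> L / (1 - x) <= cot (h z)).
  { intros z Hz.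
    assert (Hgz : g_of h z <= e2 * (1 - z)).
    { apply (g_small h H). unfold m in Hz; lra. intros c Hc. left. apply Hdg2.
      rewrite Rabs_left1 by lra. unfold m in Hz; lra. }
    pose proof (g_pos h H z ltac:(unfold m in Hz; lra)) as Hgp.
    pose proof (bg h H z ltac:(unfold m in Hz; lra)) as Hbg.
    assert (Hg2 : g_of h z <= (1 - x) / L).
    { eapply Rle_trans. exact Hgz. unfold e2.
      replace ((1 - x) / L) with (/ (2 * L) * (2 * (1 - x))) by (field; lra).
      apply Rmult_le_compat_l. left; apply Rinv_0_lt_compat; lra. unfold m in Hz; lra. }
    assert (cot (h z) = / g_of h z) by (field_simplify_eq; [lra | lra]).
    rewrite H3. replace (L / (1 - x)) with (/ ((1 - x) / L)) by (field; split; lra).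
    apply Rinv_le_contravar; auto. }
  assert (HI : L <= RInt (fun z => cot (h z)) a x).
  { rewrite <- (RInt_Chasles (fun z => cot (h z)) a m x).
    2: apply (exR_b h H); unfold m, a; lra.
    2: apply (exR_b h H); unfold m, a; lra.
    change (plus ?u ?v) with (u + v).
    assert (0 <= RInt (fun z => cot (h z)) a m).
    { apply (Rint_b_nn h H); unfold m, a; lra. }
    assert (L <= RInt (fun z => cot (h z)) m x).
    { eapply Rle_trans. 2: apply (RInt_le (fun _ => L / (1 - x))).
      rewrite RInt_const. unfold scal; simpl; unfold mult; simpl. unfold m.
      right; field; lra.
      unfold m; lra. apply ex_RInt_const. apply (exR_b h H); unfold m; lra.
      exact Hbz. }
    lra. }
  pose proof (B_ratio h H a x ltac:(unfold a; lra) Hx) as BR.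
  pose proof (exp_ineq1_le (RInt (fun z => cot (h z)) a x)).
  pose proof (B_pos h a). pose proof (B_pos h x). rewrite B_0 in IB.
  assert (HBx : B_of h a * L < B_of h x).
  { rewrite BR. apply Rmult_lt_compat_l; auto. lra. }
  assert (HR : Rabs (RInt (Fi h x) 0 x) < eps * B_of h x).
  { eapply Rle_lt_trans. exact IB.
    assert (/ ep * (B_of h a - 1) + a * (/ ep * B_of h a) <= 2 * / ep * B_of h a).
    { assert (0 < / ep) by (apply Rinv_0_lt_compat; lra).
      assert (a <= 1) by (unfold a; lra).
      assert (a * (/ ep * B_of h a) <= 1 * (/ ep * B_of h a)).
      { apply Rmult_le_compat_r; auto. apply Rmult_le_pos; lra. }
      lra. }
    assert (2 * / ep * B_of h a = eps / 2 * (B_of h a * L)).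
    { unfold L. field. lra. }
    assert (e1 * (B_of h x - B_of h a) <= eps / 2 * B_of h x) by nra.
    nra. }
  change (Rabs (C_of h x - 0) < eps).
  rewrite Rminus_0_r. unfold C_of. fold (Fi h x).
  rewrite Rabs_mult, Rabs_inv, Rabs_pos_eq by lra.
  apply (Rmult_lt_reg_l (B_of h x)); auto.
  rewrite <- Rmult_assoc, Rinv_r, Rmult_1_l by lra. lra.
Qed.
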